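(* Let $F:\mathbb{R}^N\to\mathbb{R}\cup\{+\infty\}$ be convex, proper and lower semicontinuous, let $A\in C^1(\operatorname{dom}F;\mathbb{R}^M)$, and let $J(x):=\frac12\|A(x)\|^2+F(x)$. Let $z^0\in\operatorname{dom}F$ be such that Assumption 2.1 holds with constants $\mathfrak d, C>0$. Let $\beta>0$ and $\varepsilon\in(0,\beta)$, and let the relaxation parameter $w$ satisfy $$0<w\le\min\Big\{1,\ \frac{\mathfrak d}{\sqrt{2\beta^{-1}(J(z^0)-\inf F)}},\ \frac{\beta-\varepsilon}{2CA_{\max}}\Big\}$$ (the middle term being read as $+\infty$ if $J(z^0)=\inf F$). Generate $\{z^k\}_{k\ge0}$ by the relaxed inexact proximal Gauss–Newton iteration $z^{k+1}:=(1-w)z^k+w\tilde x^k$, where for each $k$ the point $\tilde x^k$ is an approximate minimiser of $\tilde J_k$ satisfying: 1. there exist $e^k\in\partial\tilde J_k(\tilde x^k)$ with $e^k\to0$ as $k\to\infty$; and 2. either $\tilde J_k(z^k)\ge\tilde J_k(\tilde x^k)$ and $\tilde x^k\ne z^k$, or $\tilde x^k=z^k$ and $0\in\partial\tilde J_k(z^k)$. Then: (i) $\{J(z^k)\}$ is monotonically decreasing and $J(z^k)\searrow L$ for some $L\in\mathbb{R}$; (ii) every accumulation point $\hat x$ of $\{z^k\}$ is Clarke-critical, i.e. $0\in\partial_C J(\hat x)$, and satisfies $J(\hat x)=L$; (iii) with $V_L:=\{\hat x\in\operatorname{dom}F\mid 0\in\partial_CJ(\hat x),\ J(\hat x)=L\}$,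 the iterates approach a single disjoint component of $V_L$: whenever $V_L=U_1\cup U_2$ with $U_1,U_2$ disjoint closed sets, all accumulation points of $\{z^k\}$ lie in the same $U_j$, and $\operatorname{dist}(z^k,U_j)\to0$ for that $j$.
   Context: Notation: $\operatorname{dom}F:=\{x\mid F(x)<\infty\}$; $B(y;r)$ is the open ball, $\operatorname{cl}B(y;r)$ its closure; $\operatorname{lev}_cJ:=\{x\mid J(x)\le c\}$. For $y\in\operatorname{dom}F$, $\nabla A(y)\in\mathbb{R}^{N\times M}$ denotes the transpose of the Jacobian of $A$ at $y$ (so $\nabla A(y)^*$ is the Jacobian), and $\tilde A_y(x):=A(y)+\nabla A(y)^*(x-y)$ is the linearisation of $A$ at $y$. Assumption 2.1 (for the given $z^0$): $\operatorname{lev}_{J(z^0)}J$ is bounded, $\inf F>-\infty$, $A_{\max}:=\sup_{z\in\operatorname{dom}F}\|A(z)\|<\infty$, and there are $\mathfrak d,C>0$ with $\|A(x)-\tilde A_y(x)\|\le C\|x-y\|^2$ for all $y\in\operatorname{lev}_{J(z^0)}J$ and $x\in\operatorname{cl}B(y;\mathfrak d)$. Subproblems: $J_k(x):=\frac12\|\tilde A_{z^k}(x)\|^2+F(x)$ and $\tilde J_k(x):=J_k(x)+\frac\beta2\|x-z^k\|^2$ (both convex); $\partial$ denotes the convex subdifferential. The Clarke subdifferential of $J$ at $x\in\operatorname{dom}F$ is $\partial_CJ(x)=\nabla A(x)A(x)+\partial F(x)$ (where $\nabla A(x)A(x)=\nabla(\frac12\|A\|^2)(x)$), and $x$ is called Clarke-critical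 if $0\in\partial_CJ(x)$. *)

(* Defs.v *)
From Stdlib Require Import Reals Lra.
From Stdlib Require Fin.
Open Scope R_scope.

Definition vec (n : nat) := Fin.t n -> R.

Fixpoint fsum (n : nat) : (Fin.t n -> R) -> R :=
  match n with
  | O => fun _ => 0
  | S m => fun f => f Fin.F1 + fsum m (fun i => f (Fin.FS i))
  end.

Definition vdot {n} (x y : vec n) : R := fsum n (fun i => x i * y i).
Definition vnorm {n} (x : vec n) : R := sqrt (vdot x x).
Definition vadd {n} (x y : vec n) : vec n := fun i => x i + y i.
Definition vsub {n} (x y : vec n) : vec n := fun i => x i - y i.
Definition vscal {n} (a : R) (x : vec n) : vec n := fun i => a * x i.
Definition vzero {n} : vec n := fun _ => 0.

(* Extended reals R ∪ {+oo}: None = +oo. *)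
Definition ereal := option R.
Definition ele (a b : ereal) : Prop :=
  match a, b with
  | _, None => True
  | None, Some _ => False
  | Some x, Some y => x <= y
  end.
Definition eplus (r : R) (a : ereal) : ereal := option_map (fun t => r + t) a.

Definition dom {n} (F : vec n -> ereal) (x : vec n) : Prop := F x <> None.

Definition proper {n} (F : vec n -> ereal) : Prop := exists x, dom F x.

Definition convex_fun {n} (F : vec n -> ereal) : Prop :=
  forall x y t a b, 0 <= t <= 1 -> F x = Some a -> F y = Some b ->
    exists c, F (vadd (vscal t x) (vscal (1 - t) y)) = Some c /\
              c <= t * a + (1 - t) * b.

Definition egt (a : ereal) (r : R) : Prop :=
  match a with None => True | Some x => r < x end.

Definition lsc {n} (F : vec n -> ereal) : Prop :=
  forall x r, egt (F x) r ->
    exists delta, 0 < delta /\ forall y, vnorm (vsub y x) < delta -> egt (F y) r.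

Definition subdiff {n} (G : vec n -> ereal) (x e : vec n) : Prop :=
  exists gx, G x = Some gx /\
    forall y, ele (Some (gx + vdot e (vsub y x))) (G y).

(* Jacobian data: DA y j = gradient of the j-th component of A at y,
   i.e. the j-th column of ∇A(y) ∈ R^{N×M}.  ∇A(y)^* h = (⟨DA y j, h⟩)_j. *)
Definition jac_apply {N M} (DA : vec N -> Fin.t M -> vec N) (y h : vec N) : vec M :=
  fun j => vdot (DA y j) h.

Definition jacT_apply {N M} (DA : vec N -> Fin.t M -> vec N) (y : vec N) (v : vec M)
  : vec N := fun i => fsum M (fun j => v j * DA y j i).

Definition C1_on {N M} (D : vec N -> Prop) (A : vec N -> vec M)
  (DA : vec N -> Fin.t M -> vec N) : Prop :=
  (forall y, D y -> forall eps, 0 < eps -> exists delta, 0 < delta /\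
     forall x, vnorm (vsub x y) < delta ->
       vnorm (vsub (vsub (A x) (A y)) (jac_apply DA y (vsub x y)))
         <= eps * vnorm (vsub x y)) /\
  (forall y, D y -> forall j eps, 0 < eps -> exists delta, 0 < delta /\
     forall y', D y' -> vnorm (vsub y' y) < delta ->
       vnorm (vsub (DA y' j) (DA y j)) < eps).

Definition linA {N M} (A : vec N -> vec M) (DA : vec N -> Fin.t M -> vec N)
  (y x : vec N) : vec M := vadd (A y) (jac_apply DA y (vsub x y)).

Definition Jfun {N M} (A : vec N -> vec M) (F : vec N -> ereal) (x : vec N) : ereal :=
  eplus (1/2 * vnorm (A x) ^ 2) (F x).

Definition Jtilde {N M} (A : vec N -> vec M) (DA : vec N -> Fin.t M -> vec N)
  (F : vec N -> ereal) (beta : R) (z x : vec N) : ereal :=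
  eplus (1/2 * vnorm (linA A DA z x) ^ 2 + beta / 2 * vnorm (vsub x z) ^ 2) (F x).

Definition clarke_critical {N M} (A : vec N -> vec M) (DA : vec N -> Fin.t M -> vec N)
  (F : vec N -> ereal) (x : vec N) : Prop :=
  exists g, subdiff F x g /\ vadd (jacT_apply DA x (A x)) g = vzero.

Definition accumulation_point {n} (z : nat -> vec n) (x : vec n) : Prop :=
  forall eps, 0 < eps -> forall K, exists k, (K <= k)%nat /\ vnorm (vsub (z k) x) < eps.

Definition closed_vset {n} (U : vec n -> Prop) : Prop :=
  forall x, (forall eps, 0 < eps -> exists u, U u /\ vnorm (vsub u x) < eps) -> U x.

Definition dist_to_zero {n} (z : nat -> vec n) (U : vec n -> Prop) : Prop :=
  forall eps, 0 < eps -> exists K, forall k, (K <= k)%nat ->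
    exists u, U u /\ vnorm (vsub (z k) u) < eps.

(* Main.v *)
Require Import Defs.
From Stdlib Require Import Reals Lra Psatz FunctionalExtensionality ClassicalEpsilon Classical.
From Stdlib Require Fin.
Open Scope R_scope.


Lemma fsum_ext n (f g : Fin.t n -> R) : (forall i, f i = g i) -> fsum n f = fsum n g.
Proof.
  revert f g; induction n as [|n IH]; intros f g H; simpl; [reflexivity|].
  rewrite H; f_equal; apply IH; intros; apply H.
Qed.

Lemma fsum_plus n (f g : Fin.t n -> R) : fsum n (fun i => f i + g i) = fsum n f + fsum n g.
Proof.
  revert f g; induction n as [|n IH]; intros f g; simpl; [ring|].
  rewrite (IH (fun i => f (Fin.FS i)) (fun i => g (Fin.FS i))); ring.
Qed.

Lemma fsum_scal n (c : R) (f : Fin.t n -> R) : fsum n (fun i => c * f i) = c * fsum n f.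
Proof.
  revert f; induction n as [|n IH]; intros f; simpl; [ring|].
  rewrite (IH (fun i => f (Fin.FS i))); ring.
Qed.

Lemma fsum_zero n : fsum n (fun _ => 0) = 0.
Proof. induction n; simpl; [ring| rewrite IHn; ring]. Qed.

Lemma fsum_minus n (f g : Fin.t n -> R) : fsum n (fun i => f i - g i) = fsum n f - fsum n g.
Proof.
  revert f g; induction n as [|n IH]; intros f g; simpl; [ring|].
  rewrite (IH (fun i => f (Fin.FS i)) (fun i => g (Fin.FS i))); ring.
Qed.

Lemma fsum_le n (f g : Fin.t n -> R) : (forall i, f i <= g i) -> fsum n f <= fsum n g.
Proof.
  revert f g; induction n as [|n IH]; intros f g H; simpl; [lra|].
  specialize (IH (fun i => f (Fin.FS i)) (fun i => g (Fin.FS i)) (fun i => H _)).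
  specialize (H Fin.F1); lra.
Qed.

Lemma fsum_nonneg n (f : Fin.t n -> R) : (forall i, 0 <= f i) -> 0 <= fsum n f.
Proof. intros H. rewrite <- (fsum_zero n). apply fsum_le; auto. Qed.

Lemma fsum_swap n m (h : Fin.t n -> Fin.t m -> R) :
  fsum n (fun i => fsum m (fun j => h i j)) = fsum m (fun j => fsum n (fun i => h i j)).
Proof.
  revert h; induction n as [|n IH]; intros h; simpl.
  - symmetry; apply fsum_zero.
  - rewrite (IH (fun i j => h (Fin.FS i) j)).
    rewrite <- fsum_plus. reflexivity.
Qed.

Lemma fsum_abs n (f : Fin.t n -> R) : Rabs (fsum n f) <= fsum n (fun i => Rabs (f i)).
Proof.
  revert f; induction n as [|n IH]; intros f; simpl.
  - rewrite Rabs_R0; lra.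
  - eapply Rle_trans; [apply Rabs_triang|]. specialize (IH (fun i => f (Fin.FS i))). lra.
Qed.

Lemma fsum_ge_term n (g : Fin.t n -> R) i : (forall j, 0 <= g j) -> g i <= fsum n g.
Proof.
  revert g i; induction n as [|n IH]; intros g i H; [inversion i|].
  simpl. apply (Fin.caseS' i (fun i => g i <= g Fin.F1 + fsum n (fun i0 => g (Fin.FS i0)))).
  - pose proof (fsum_nonneg n (fun i0 => g (Fin.FS i0)) (fun j => H _)); lra.
  - intros p. pose proof (IH (fun i0 => g (Fin.FS i0)) p (fun j => H _)). pose proof (H Fin.F1); simpl in *; lra.
Qed.

Lemma vdot_sym {n} (x y : vec n) : vdot x y = vdot y x.
Proof. unfold vdot; apply fsum_ext; intros; ring. Qed.

Lemma vdot_add_l {n} (x y z : vec n) : vdot (vadd x y) z = vdot x z + vdot y z.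
Proof. unfold vdot, vadd. rewrite <- fsum_plus; apply fsum_ext; intros; ring. Qed.
Lemma vdot_add_r {n} (x y z : vec n) : vdot z (vadd x y) = vdot z x + vdot z y.
Proof. unfold vdot, vadd. rewrite <- fsum_plus; apply fsum_ext; intros; ring. Qed.
Lemma vdot_sub_l {n} (x y z : vec n) : vdot (vsub x y) z = vdot x z - vdot y z.
Proof. unfold vdot, vsub. rewrite <- fsum_minus; apply fsum_ext; intros; ring. Qed.
Lemma vdot_sub_r {n} (x y z : vec n) : vdot z (vsub x y) = vdot z x - vdot z y.
Proof. unfold vdot, vsub. rewrite <- fsum_minus; apply fsum_ext; intros; ring. Qed.
Lemma vdot_scal_l {n} a (x z : vec n) : vdot (vscal a x) z = a * vdot x z.
Proof. unfold vdot, vscal. rewrite <- fsum_scal; apply fsum_ext; intros; ring. Qed.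
Lemma vdot_scal_r {n} a (x z : vec n) : vdot z (vscal a x) = a * vdot z x.
Proof. unfold vdot, vscal. rewrite <- fsum_scal; apply fsum_ext; intros; ring. Qed.
Lemma vdot_self_nonneg {n} (x : vec n) : 0 <= vdot x x.
Proof. unfold vdot; apply fsum_nonneg; intros; nra. Qed.

Lemma vnorm_nonneg {n} (x : vec n) : 0 <= vnorm x.
Proof. apply sqrt_pos. Qed.

Lemma vnorm_sq {n} (x : vec n) : vnorm x ^ 2 = vdot x x.
Proof. unfold vnorm; rewrite pow2_sqrt; auto using vdot_self_nonneg. Qed.

Lemma vnorm_sq' {n} (x : vec n) : vnorm x * vnorm x = vdot x x.
Proof. unfold vnorm; rewrite sqrt_sqrt; auto using vdot_self_nonneg. Qed.

Lemma le_sqrt_of_sq (p q : R) : 0 <= q -> p <= q * q -> sqrt p <= q.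
Proof.
  intros Hq Hp. destruct (Rle_lt_dec p 0).
  - rewrite sqrt_neg_0; lra.
  - rewrite <- (sqrt_square q Hq). apply sqrt_le_1_alt; lra.
Qed.

Lemma sq_le_of_le (a b : R) : 0 <= a -> a <= b -> a * a <= b * b.
Proof. intros; nra. Qed.

Lemma le_of_sq_le (a b : R) : 0 <= b -> a * a <= b * b -> a <= b.
Proof. intros; nra. Qed.

Lemma vdot_CS_sq {n} (x y : vec n) : vdot x y * vdot x y <= vdot x x * vdot y y.
Proof.
  set (a := vdot x x); set (b := vdot x y); set (c := vdot y y).
  assert (Hq : forall t, 0 <= a + 2 * t * b + t * t * c).
  { intros t. pose proof (vdot_self_nonneg (vadd x (vscal t y))) as H.
    rewrite !vdot_add_l, !vdot_add_r, !vdot_scal_l, !vdot_scal_r in H.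
    rewrite (vdot_sym y x) in H. unfold a, b, c. nra. }
  assert (Ha : 0 <= a) by apply vdot_self_nonneg.
  assert (Hc : 0 <= c) by apply vdot_self_nonneg.
  destruct (Req_dec c 0) as [H0|H0].
  - destruct (Req_dec b 0) as [Hb|Hb].
    + rewrite Hb; nra.
    + exfalso. specialize (Hq (- (a + 1) / (2 * b))).
      rewrite H0 in Hq.
      replace (2 * (- (a + 1) / (2 * b)) * b) with (-(a+1)) in Hq by (field; auto). lra.
  - specialize (Hq (- b / c)).
    replace (a + 2 * (- b / c) * b + - b / c * (- b / c) * c) with (a - b * b / c) in Hq by (field; auto).
    assert (0 < c) by lra.
    apply Rmult_le_compat_r with (r := c) in Hq; [|lra].
    replace ((a - b * b / c) * c) with (a * c - b * b) in Hq by (field; auto).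
    nra.
Qed.

Lemma vdot_CS {n} (x y : vec n) : Rabs (vdot x y) <= vnorm x * vnorm y.
Proof.
  apply le_of_sq_le.
  - apply Rmult_le_pos; apply vnorm_nonneg.
  - rewrite <- Rabs_mult, Rabs_pos_eq by nra.
    replace (vnorm x * vnorm y * (vnorm x * vnorm y)) with ((vnorm x * vnorm x) * (vnorm y * vnorm y)) by ring.
    rewrite !vnorm_sq'. apply vdot_CS_sq.
Qed.

Lemma vdot_le {n} (x y : vec n) : vdot x y <= vnorm x * vnorm y.
Proof. pose proof (vdot_CS x y). pose proof (Rle_abs (vdot x y)). lra. Qed.

Lemma vnorm_triang {n} (x y : vec n) : vnorm (vadd x y) <= vnorm x + vnorm y.
Proof.
  unfold vnorm at 1. apply le_sqrt_of_sq.
  - pose proof (vnorm_nonneg x); pose proof (vnorm_nonneg y); lra.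
  - rewrite !vdot_add_l, !vdot_add_r. rewrite (vdot_sym y x).
    pose proof (vdot_le x y). rewrite <- !vnorm_sq'. nra.
Qed.

Lemma vnorm_scal {n} a (x : vec n) : vnorm (vscal a x) = Rabs a * vnorm x.
Proof.
  unfold vnorm. rewrite vdot_scal_l, vdot_scal_r, <- Rmult_assoc.
  rewrite sqrt_mult by (nra || apply vdot_self_nonneg).
  f_equal. rewrite <- sqrt_Rsqr_abs. reflexivity.
Qed.

Lemma vsub_add {n} (x y z : vec n) : vsub x z = vadd (vsub x y) (vsub y z).
Proof. apply functional_extensionality; intros; unfold vsub, vadd; ring. Qed.

Lemma vnorm_sub_tri {n} (x y z : vec n) : vnorm (vsub x z) <= vnorm (vsub x y) + vnorm (vsub y z).
Proof. rewrite (vsub_add x y z). apply vnorm_triang. Qed.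

Lemma vnorm_sub_sym {n} (x y : vec n) : vnorm (vsub x y) = vnorm (vsub y x).
Proof.
  replace (vsub x y) with (vscal (-1) (vsub y x)).
  - rewrite vnorm_scal. rewrite (Rabs_left (-1)) by lra. ring.
  - apply functional_extensionality; intros; unfold vsub, vscal; ring.
Qed.

Lemma vnorm_zero_sub {n} (x : vec n) : vnorm (vsub x x) = 0.
Proof.
  replace (vsub x x) with (vscal 0 x).
  - rewrite vnorm_scal, Rabs_R0; ring.
  - apply functional_extensionality; intros; unfold vsub, vscal; ring.
Qed.

Lemma vnorm_zero {n} : vnorm (@vzero n) = 0.
Proof.
  replace (@vzero n) with (vscal 0 (@vzero n)).
  - rewrite vnorm_scal, Rabs_R0; ring.
  - apply functional_extensionality; intros; unfold vzero, vscal; ring.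
Qed.

Lemma vabs_le_norm {n} (v : vec n) i : Rabs (v i) <= vnorm v.
Proof.
  apply le_of_sq_le; [apply vnorm_nonneg|]. rewrite vnorm_sq'.
  rewrite <- Rabs_mult, Rabs_pos_eq by nra.
  unfold vdot. apply (fsum_ge_term n (fun i => v i * v i)). intros; nra.
Qed.

Lemma vnorm_le_sumabs {n} (v : vec n) : vnorm v <= fsum n (fun i => Rabs (v i)).
Proof.
  revert v; induction n as [|n IH]; intros v.
  - unfold vnorm, vdot; simpl. rewrite sqrt_0; lra.
  - simpl. specialize (IH (fun i => v (Fin.FS i))).
    unfold vnorm, vdot in *; simpl.
    apply le_sqrt_of_sq.
    + pose proof (Rabs_pos (v Fin.F1)). pose proof (sqrt_pos (fsum n (fun i => v (Fin.FS i) * v (Fin.FS i)))). lra.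
    + set (s := fsum n (fun i => v (Fin.FS i) * v (Fin.FS i))) in *.
      assert (Hs : 0 <= s) by (apply fsum_nonneg; intros; nra).
      set (t := fsum n (fun i => Rabs (v (Fin.FS i)))) in *.
      assert (s <= t * t).
      { rewrite <- (sqrt_sqrt s Hs). apply sq_le_of_le; auto using sqrt_pos. }
      assert (0 <= t) by (pose proof (sqrt_pos s); lra).
      pose proof (Rabs_pos (v Fin.F1)).
      assert (v Fin.F1 * v Fin.F1 = Rabs (v Fin.F1) * Rabs (v Fin.F1)) by (rewrite <- Rabs_mult, Rabs_pos_eq; nra).
      nra.
Qed.

Definition vcv {n} (s : nat -> vec n) (x : vec n) : Prop :=
  forall eps, 0 < eps -> exists K, forall k, (K <= k)%nat -> vnorm (vsub (s k) x) < eps.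

Lemma inv_small (eps : R) : 0 < eps -> exists N, forall n, (N <= n)%nat -> 1 / (INR n + 1) < eps.
Proof.
  intros He. destruct (INR_unbounded (1 / eps)) as [N HN]. exists N. intros n Hn.
  apply le_INR in Hn. pose proof (pos_INR N).
  assert (1/eps < INR n + 1) by lra.
  apply (Rmult_lt_compat_l eps) in H0; [|lra].
  replace (eps * (1/eps)) with 1 in H0 by (field; lra).
  apply (Rmult_lt_reg_r (INR n + 1)); [lra|].
  replace (1 / (INR n + 1) * (INR n + 1)) with 1 by (field; lra). lra.
Qed.

Lemma CV_const c : Un_cv (fun _ => c) c.
Proof. intros eps He. exists 0%nat. intros. unfold Rdist. rewrite Rminus_diag, Rabs_R0. lra. Qed.

Lemma CV_sandwich0 (a b : nat -> R) : (forall j, 0 <= a j <= b j) -> Un_cv b 0 -> Un_cv a 0.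
Proof.
  intros H Hb eps He. destruct (Hb eps He) as [K HK]. exists K. intros k Hk.
  specialize (HK k Hk). specialize (H k). unfold Rdist in *.
  rewrite Rminus_0_r in *. rewrite Rabs_pos_eq in * by lra. lra.
Qed.

Lemma CV_ext (a b : nat -> R) l : (forall j, a j = b j) -> Un_cv a l -> Un_cv b l.
Proof. intros H Ha eps He. destruct (Ha eps He) as [K HK]. exists K. intros k Hk. rewrite <- H. auto. Qed.

Lemma CV_abs0 (a : nat -> R) l : Un_cv a l -> Un_cv (fun j => Rabs (a j - l)) 0.
Proof.
  intros Ha eps He. destruct (Ha eps He) as [K HK]. exists K. intros k Hk.
  specialize (HK k Hk). unfold Rdist in *. rewrite Rminus_0_r, Rabs_Rabsolu. auto.
Qed.

Lemma CV_of_abs0 (a : nat -> R) l : Un_cv (fun j => Rabs (a j - l)) 0 -> Un_cv a l.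
Proof.
  intros Ha eps He. destruct (Ha eps He) as [K HK]. exists K. intros k Hk.
  specialize (HK k Hk). unfold Rdist in *. rewrite Rminus_0_r, Rabs_Rabsolu in HK. auto.
Qed.

Lemma CV_fsum n (f : nat -> Fin.t n -> R) (l : Fin.t n -> R) :
  (forall i, Un_cv (fun j => f j i) (l i)) -> Un_cv (fun j => fsum n (f j)) (fsum n l).
Proof.
  revert f l; induction n as [|n IH]; intros f l H; simpl.
  - apply CV_const.
  - apply CV_plus; [auto|]. apply (IH (fun j i => f j (Fin.FS i)) (fun i => l (Fin.FS i))). auto.
Qed.

Lemma vcv_comp {n} (s : nat -> vec n) x : vcv s x -> forall i, Un_cv (fun j => s j i) (x i).
Proof.
  intros H i eps He. destruct (H eps He) as [K HK]. exists K. intros k Hk.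
  specialize (HK k Hk). unfold Rdist. pose proof (vabs_le_norm (vsub (s k) x) i). unfold vsub in *. lra.
Qed.

Lemma vcv_of_comp {n} (s : nat -> vec n) x : (forall i, Un_cv (fun j => s j i) (x i)) -> vcv s x.
Proof.
  intros H.
  assert (Hc : Un_cv (fun j => fsum n (fun i => Rabs (s j i - x i))) (fsum n (fun _ => 0))).
  { apply CV_fsum. intros i. apply CV_abs0. auto. }
  rewrite fsum_zero in Hc.
  intros eps He. destruct (Hc eps He) as [K HK]. exists K. intros k Hk.
  specialize (HK k Hk). unfold Rdist in HK. rewrite Rminus_0_r in HK.
  pose proof (vnorm_le_sumabs (vsub (s k) x)). unfold vsub at 2 in H0.
  pose proof (Rle_abs (fsum n (fun i : Fin.t n => Rabs (s k i - x i)))). lra.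
Qed.

Lemma vcv_iff_norm {n} (s : nat -> vec n) x : vcv s x <-> Un_cv (fun j => vnorm (vsub (s j) x)) 0.
Proof.
  split; intros H eps He; destruct (H eps He) as [K HK]; exists K; intros k Hk; specialize (HK k Hk);
  unfold Rdist in *; rewrite Rminus_0_r in *; rewrite Rabs_pos_eq in * by apply vnorm_nonneg; auto.
Qed.

Lemma CV_vdot {n} (s t : nat -> vec n) x y : vcv s x -> vcv t y ->
  Un_cv (fun j => vdot (s j) (t j)) (vdot x y).
Proof.
  intros Hs Ht. unfold vdot. apply (CV_fsum n (fun j i => s j i * t j i)).
  intros i. apply CV_mult; apply vcv_comp; auto.
Qed.

Lemma CV_vnorm {n} (s : nat -> vec n) x : vcv s x -> Un_cv (fun j => vnorm (s j)) (vnorm x).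
Proof.
  intros H eps He. destruct (H eps He) as [K HK]. exists K. intros k Hk. specialize (HK k Hk).
  unfold Rdist. pose proof (vnorm_sub_tri (s k) x vzero). pose proof (vnorm_sub_tri x (s k) vzero).
  rewrite (vnorm_sub_sym x (s k)) in H1.
  replace (vsub (s k) vzero) with (s k) in * by (apply functional_extensionality; intros; unfold vsub, vzero; ring).
  replace (vsub x vzero) with x in * by (apply functional_extensionality; intros; unfold vsub, vzero; ring).
  apply Rabs_def1; lra.
Qed.

Lemma vcv_const {n} (x : vec n) : vcv (fun _ => x) x.
Proof. intros eps He. exists 0%nat. intros. rewrite vnorm_zero_sub. lra. Qed.

Lemma vcv_add {n} (s t : nat -> vec n) x y : vcv s x -> vcv t y -> vcv (fun j => vadd (s j) (t j)) (vadd x y).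
Proof.
  intros. apply vcv_of_comp. intros i. unfold vadd. apply CV_plus; apply vcv_comp; auto.
Qed.

Lemma vcv_sub {n} (s t : nat -> vec n) x y : vcv s x -> vcv t y -> vcv (fun j => vsub (s j) (t j)) (vsub x y).
Proof.
  intros. apply vcv_of_comp. intros i. unfold vsub. apply CV_minus; apply vcv_comp; auto.
Qed.

Lemma vcv_scal {n} (a : nat -> R) (s : nat -> vec n) c x : Un_cv a c -> vcv s x -> vcv (fun j => vscal (a j) (s j)) (vscal c x).
Proof.
  intros. apply vcv_of_comp. intros i. unfold vscal. apply CV_mult; auto; apply vcv_comp; auto.
Qed.

Lemma vcv_ext {n} (s t : nat -> vec n) x : (forall j, s j = t j) -> vcv s x -> vcv t x.
Proof. intros H Hs eps He. destruct (Hs eps He) as [K HK]. exists K. intros k Hk. rewrite <- H. auto. Qed.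

Lemma vcv_zero_norm {n} (s : nat -> vec n) x : Un_cv (fun j => vnorm (vsub (s j) x)) 0 -> vcv s x.
Proof. apply vcv_iff_norm. Qed.

Lemma vcv_close {n} (s t : nat -> vec n) x : vcv s x -> Un_cv (fun j => vnorm (vsub (t j) (s j))) 0 -> vcv t x.
Proof.
  intros Hs Ht eps He. destruct (Hs (eps/2)) as [K1 H1]; [lra|]. destruct (Ht (eps/2)) as [K2 H2]; [lra|].
  exists (K1 + K2)%nat. intros k Hk. specialize (H1 k ltac:(lia)). specialize (H2 k ltac:(lia)).
  unfold Rdist in H2. rewrite Rminus_0_r, Rabs_pos_eq in H2 by apply vnorm_nonneg.
  pose proof (vnorm_sub_tri (t k) (s k) x). lra.
Qed.

Definition strict_incr (phi : nat -> nat) := forall j, (phi j < phi (S j))%nat.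

Lemma strict_incr_ge phi : strict_incr phi -> forall j, (j <= phi j)%nat.
Proof. intros H j; induction j; [lia|]. specialize (H j). lia. Qed.

Lemma strict_incr_mono phi : strict_incr phi -> forall i j, (i <= j)%nat -> (phi i <= phi j)%nat.
Proof. intros H i j Hij. induction Hij; [lia|]. specialize (H m). lia. Qed.

Lemma strict_incr_comp phi psi : strict_incr phi -> strict_incr psi -> strict_incr (fun j => phi (psi j)).
Proof.
  intros H1 H2 j. pose proof (strict_incr_mono phi H1 (S (psi j)) (psi (S j)) (H2 j)). specialize (H1 (psi j)). lia.
Qed.

Lemma CV_subseq (a : nat -> R) l phi : (forall j, (j <= phi j)%nat) -> Un_cv a l -> Un_cv (fun j => a (phi j)) l.
Proof. intros Hp H eps He. destruct (H eps He) as [K HK]. exists K. intros k Hk. apply HK. specialize (Hp k). lia. Qed.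

Lemma vcv_subseq {n} (s : nat -> vec n) x phi : (forall j, (j <= phi j)%nat) -> vcv s x -> vcv (fun j => s (phi j)) x.
Proof. intros Hp H eps He. destruct (H eps He) as [K HK]. exists K. intros k Hk. apply HK. specialize (Hp k). lia. Qed.

Lemma BW_R (u : nat -> R) B : (forall k, Rabs (u k) <= B) ->
  exists phi l, strict_incr phi /\ Un_cv (fun j => u (phi j)) l.
Proof.
  intros Hb.
  destruct (Bolzano_Weierstrass u (fun c => -B <= c <= B) (compact_P3 (-B) B)) as [l Hl].
  { intros n. specialize (Hb n). pose proof (Rle_abs (u n)). pose proof (Rle_abs (- u n)). rewrite Rabs_Ropp in *. lra. }
  assert (Hstep : forall (m n : nat), exists p, (m < p)%nat /\ Rabs (u p - l) < 1 / (INR n + 1)).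
  { intros m n. assert (Hpos : 0 < 1 / (INR n + 1)).
    { pose proof (pos_INR n). apply Rdiv_lt_0_compat; lra. }
    destruct (Hl (disc l (mkposreal _ Hpos)) (S m)) as [p [Hp1 Hp2]].
    - exists (mkposreal _ Hpos). intros y Hy; exact Hy.
    - exists p. split; [lia|]. exact Hp2. }
  set (g := fun m n => proj1_sig (constructive_indefinite_description _ (Hstep m n))).
  assert (Hg : forall m n, (m < g m n)%nat /\ Rabs (u (g m n) - l) < 1 / (INR n + 1)).
  { intros. unfold g. destruct (constructive_indefinite_description _ (Hstep m n)); auto. }
  set (phi := fix phi j := match j with O => g O O | S j' => g (phi j') (S j') end).
  exists phi, l. split.
  - intros j. simpl. apply Hg.
  - intros eps He. destruct (inv_small eps He) as [K HK]. exists K. intros k Hk.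
    unfold Rdist. eapply Rlt_trans; [|apply (HK k); lia].
    destruct k; simpl; apply Hg.
Qed.

Definition vcons {n} (a : R) (t : vec n) : vec (S n) := fun i => Fin.caseS' i (fun _ => R) a t.

Lemma vnorm_tail {n} (v : vec (S n)) : vnorm (fun i => v (Fin.FS i)) <= vnorm v.
Proof.
  unfold vnorm. apply sqrt_le_1_alt. unfold vdot; simpl. nra.
Qed.

Lemma BW_vec {n} (s : nat -> vec n) B : (forall k, vnorm (s k) <= B) ->
  exists phi x, strict_incr phi /\ vcv (fun j => s (phi j)) x.
Proof.
  revert s; induction n as [|n IH]; intros s Hb.
  - exists (fun j => j), vzero. split; [intros j; lia|].
    intros eps He. exists 0%nat. intros. unfold vnorm, vdot; simpl. rewrite sqrt_0. lra.
  - destruct (IH (fun k i => s k (Fin.FS i))) as [phi1 [t [Hp1 Ht]]].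
    { intros k. eapply Rle_trans; [apply (vnorm_tail (s k))|]. auto. }
    destruct (BW_R (fun j => s (phi1 j) Fin.F1) B) as [phi2 [a [Hp2 Ha]]].
    { intros k. eapply Rle_trans; [apply vabs_le_norm|]. auto. }
    exists (fun j => phi1 (phi2 j)), (vcons a t). split.
    + apply strict_incr_comp; auto.
    + apply vcv_of_comp. intros i.
      apply (Fin.caseS' i (fun i => Un_cv (fun j : nat => s (phi1 (phi2 j)) i) (vcons a t i))).
      * exact Ha.
      * intros p. simpl. pose proof (vcv_comp _ _ Ht p) as Hp.
        apply (CV_subseq _ _ phi2 (strict_incr_ge _ Hp2)) in Hp. exact Hp.
Qed.

Lemma acc_exists {n} (s : nat -> vec n) (P : nat -> Prop) B :
  (forall k, P k -> vnorm (s k) <= B) -> (forall K, exists k, (K <= k)%nat /\ P k) ->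
  exists x, forall eps, 0 < eps -> forall K, exists k, (K <= k)%nat /\ P k /\ vnorm (vsub (s k) x) < eps.
Proof.
  intros Hb Hinf.
  set (psi := fun K => proj1_sig (constructive_indefinite_description _ (Hinf K))).
  assert (Hpsi : forall K, (K <= psi K)%nat /\ P (psi K)).
  { intros. unfold psi. destruct (constructive_indefinite_description _ (Hinf K)); auto. }
  destruct (BW_vec (fun K => s (psi K)) B) as [phi [x [Hphi Hx]]].
  { intros K. apply Hb, Hpsi. }
  exists x. intros eps He K. destruct (Hx eps He) as [K1 HK1].
  exists (psi (phi (K + K1)%nat)). pose proof (strict_incr_ge _ Hphi (K + K1)%nat).
  pose proof (Hpsi (phi (K + K1)%nat)). split; [lia|]. split; [tauto|]. apply HK1. lia.
Qed.

Definition fval {n} (F : vec n -> ereal) (x : vec n) : R :=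
  match F x with Some a => a | None => 0 end.

Lemma fval_some {n} (F : vec n -> ereal) x a : F x = Some a -> fval F x = a.
Proof. unfold fval; intros ->; auto. Qed.

Lemma dom_fval {n} (F : vec n -> ereal) x : dom F x -> F x = Some (fval F x).
Proof. unfold dom, fval. destruct (F x); congruence. Qed.

Lemma vdot_zero_r {n} (x : vec n) : vdot x vzero = 0.
Proof. unfold vdot, vzero. transitivity (fsum n (fun _ => 0)); [apply fsum_ext; intros; ring|apply fsum_zero]. Qed.

Lemma jac_scal {N M} (DA : vec N -> Fin.t M -> vec N) y t h :
  jac_apply DA y (vscal t h) = vscal t (jac_apply DA y h).
Proof. apply functional_extensionality; intros j. unfold jac_apply, vscal at 1. apply vdot_scal_r. Qed.

Lemma jac_adjoint {N M} (DA : vec N -> Fin.t M -> vec N) y (a : vec M) (h : vec N) :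
  vdot a (jac_apply DA y h) = vdot (jacT_apply DA y a) h.
Proof.
  unfold jac_apply, jacT_apply, vdot.
  transitivity (fsum M (fun j => fsum N (fun i => a j * DA y j i * h i))).
  - apply fsum_ext; intros j. rewrite <- fsum_scal. apply fsum_ext; intros; ring.
  - rewrite fsum_swap. apply fsum_ext; intros i. rewrite Rmult_comm, <- fsum_scal.
    apply fsum_ext; intros; ring.
Qed.

Definition jnorm {N M} (DA : vec N -> Fin.t M -> vec N) y := fsum M (fun j => vnorm (DA y j)).

Lemma jac_bound {N M} (DA : vec N -> Fin.t M -> vec N) y h :
  vnorm (jac_apply DA y h) <= jnorm DA y * vnorm h.
Proof.
  eapply Rle_trans; [apply vnorm_le_sumabs|]. unfold jnorm. rewrite Rmult_comm, <- fsum_scal.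
  apply fsum_le. intros j. unfold jac_apply. rewrite Rmult_comm. apply vdot_CS.
Qed.

Lemma halfsq_convex {n} (a b : vec n) w : 0 <= w <= 1 ->
  1/2 * vnorm (vadd (vscal (1 - w) a) (vscal w b)) ^ 2 <=
  (1 - w) * (1/2 * vnorm a ^ 2) + w * (1/2 * vnorm b ^ 2).
Proof.
  intros Hw. rewrite !vnorm_sq.
  rewrite !vdot_add_l, !vdot_add_r, !vdot_scal_l, !vdot_scal_r.
  rewrite (vdot_sym b a).
  pose proof (vdot_self_nonneg (vsub a b)) as H.
  rewrite !vdot_sub_l, !vdot_sub_r in H. rewrite (vdot_sym b a) in H.
  assert (0 <= w * (1 - w)) by nra. nra.
Qed.

Lemma halfsq_diff {n} (a b : vec n) : 1/2 * vnorm a ^ 2 - 1/2 * vnorm b ^ 2 <= vnorm (vsub a b) * vnorm a.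
Proof.
  rewrite !vnorm_sq. pose proof (vdot_le (vsub a b) a).
  pose proof (vdot_self_nonneg (vsub a b)) as H1.
  rewrite !vdot_sub_l, !vdot_sub_r in *. rewrite (vdot_sym b a) in *. nra.
Qed.

Lemma vsub_conv {n} (x y : vec n) t :
  vsub (vadd (vscal t y) (vscal (1 - t) x)) x = vscal t (vsub y x).
Proof. apply functional_extensionality; intros; unfold vsub, vadd, vscal; ring. Qed.

Lemma opt_to_crit {N M} (F : vec N -> ereal) (DA : vec N -> Fin.t M -> vec N) (a : vec M)
  (xh : vec N) fh beta : convex_fun F -> F xh = Some fh -> 0 < beta ->
  (forall y fy, F y = Some fy ->
     fh + 1/2 * vnorm a ^ 2 <= fy + 1/2 * vnorm (vadd a (jac_apply DA xh (vsub y xh))) ^ 2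
        + beta / 2 * vnorm (vsub y xh) ^ 2) ->
  forall y fy, F y = Some fy -> fh - vdot (jacT_apply DA xh a) (vsub y xh) <= fy.
Proof.
  intros Hconv Hfh Hb Hopt y fy Hfy.
  set (h := vsub y xh). set (b := jac_apply DA xh h).
  set (p := vdot (jacT_apply DA xh a) h).
  assert (Hp : p = vdot a b) by (unfold p, b; rewrite jac_adjoint; reflexivity).
  set (Q := 1/2 * vdot b b + beta/2 * vdot h h).
  assert (HQ : 0 <= Q) by (unfold Q; pose proof (vdot_self_nonneg b); pose proof (vdot_self_nonneg h); nra).
  assert (Ht : forall t, 0 < t <= 1 -> 0 <= fy - fh + p + t * Q).
  { intros t Ht.
    destruct (Hconv y xh t fy fh ltac:(lra) Hfy Hfh) as [c [Hc Hcle]].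
    specialize (Hopt _ _ Hc). rewrite vsub_conv in Hopt. fold h in Hopt.
    rewrite jac_scal in Hopt. fold b in Hopt.
    rewrite !vnorm_sq, vdot_scal_l, vdot_scal_r in Hopt.
    rewrite !vdot_add_l, !vdot_add_r, !vdot_scal_l, !vdot_scal_r in Hopt.
    rewrite (vdot_sym b a) in Hopt. rewrite <- Hp in Hopt.
    assert (t * (fy - fh + p + t * Q) >= 0) by (unfold Q; nra).
    nra. }
  destruct (Rle_lt_dec 0 (fy - fh + p)) as [H0|H0]; [unfold p, h in *; lra|].
  exfalso. set (g0 := fy - fh + p) in *.
  set (t := Rmin 1 (- g0 / (2 * (Q + 1)))).
  assert (Ht0 : 0 < t).
  { unfold t. apply Rmin_glb_lt; [lra|]. apply Rdiv_lt_0_compat; lra. }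
  assert (Ht1 : t <= 1) by apply Rmin_l.
  assert (Ht2 : t <= - g0 / (2 * (Q + 1))) by apply Rmin_r.
  specialize (Ht t (conj Ht0 Ht1)).
  assert (t * Q <= - g0 / 2).
  { apply Rle_trans with (- g0 / (2 * (Q + 1)) * Q).
    - apply Rmult_le_compat_r; lra.
    - apply (Rmult_le_reg_r (2 * (Q+1))); [lra|].
      replace (- g0 / (2 * (Q + 1)) * Q * (2 * (Q + 1))) with (- g0 * Q) by (field; lra). nra. }
  lra.
Qed.

Lemma lsc_liminf {n} (F : vec n -> ereal) (xh : vec n) fh (s : nat -> vec n) (fs hs : nat -> R) H :
  lsc F -> F xh = Some fh -> vcv s xh -> (forall j, F (s j) = Some (fs j)) ->
  (forall j, fs j <= hs j) -> Un_cv hs H -> fh <= H.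
Proof.
  intros Hl Hf Hs Hfs Hle Hh. destruct (Rle_lt_dec fh H) as [|Hlt]; auto. exfalso.
  set (r := (H + fh) / 2).
  destruct (Hl xh r) as [de [Hde Hde']]. { rewrite Hf; simpl; unfold r; lra. }
  destruct (Hs de Hde) as [K1 HK1]. destruct (Hh (fh - r)) as [K2 HK2]; [unfold r; lra|].
  specialize (HK1 (K1 + K2)%nat ltac:(lia)). specialize (HK2 (K1 + K2)%nat ltac:(lia)).
  specialize (Hde' _ HK1). rewrite Hfs in Hde'. simpl in Hde'.
  specialize (Hle (K1 + K2)%nat). unfold Rdist in HK2. pose proof (Rle_abs (hs (K1 + K2)%nat - H)).
  unfold r in *. lra.
Qed.

Lemma acc_subseq {n} (z : nat -> vec n) x : accumulation_point z x ->
  exists phi, strict_incr phi /\ vcv (fun j => z (phi j)) x.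
Proof.
  intros Hacc.
  assert (Hstep : forall (m k : nat), exists p, (m < p)%nat /\ vnorm (vsub (z p) x) < 1 / (INR k + 1)).
  { intros m k. assert (Hpos : 0 < 1 / (INR k + 1)).
    { pose proof (pos_INR k). apply Rdiv_lt_0_compat; lra. }
    destruct (Hacc _ Hpos (S m)) as [p [Hp1 Hp2]]. exists p. split; [lia|auto]. }
  set (g := fun m k => proj1_sig (constructive_indefinite_description _ (Hstep m k))).
  assert (Hg : forall m k, (m < g m k)%nat /\ vnorm (vsub (z (g m k)) x) < 1 / (INR k + 1)).
  { intros. unfold g. destruct (constructive_indefinite_description _ (Hstep m k)); auto. }
  set (phi := fix phi j := match j with O => g O O | S j' => g (phi j') (S j') end).
  exists phi. split.
  - intros j. simpl. apply Hg.
  - intros eps He. destruct (inv_small eps He) as [K HK]. exists K. intros k Hk.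
    eapply Rlt_trans; [|apply (HK k); lia]. destruct k; simpl; apply Hg.
Qed.

Lemma Jtilde_some {N M} (A : vec N -> vec M) DA F beta z x g :
  Jtilde A DA F beta z x = Some g ->
  F x = Some (fval F x) /\ g = 1/2 * vnorm (linA A DA z x) ^ 2 + beta / 2 * vnorm (vsub x z) ^ 2 + fval F x.
Proof.
  unfold Jtilde, eplus, fval. destruct (F x); simpl; intros H; inversion H; auto.
Qed.

Lemma Jtilde_val {N M} (A : vec N -> vec M) DA F beta z x :
  F x = Some (fval F x) ->
  Jtilde A DA F beta z x = Some (1/2 * vnorm (linA A DA z x) ^ 2 + beta / 2 * vnorm (vsub x z) ^ 2 + fval F x).
Proof. unfold Jtilde. intros ->. reflexivity. Qed.

Lemma linA_self {N M} (A : vec N -> vec M) DA z : linA A DA z z = A z.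
Proof.
  apply functional_extensionality; intros j. unfold linA, vadd, jac_apply.
  replace (vsub z z) with (@vzero N) by (apply functional_extensionality; intros; unfold vsub, vzero; ring).
  rewrite vdot_zero_r. ring.
Qed.

Lemma A_cont {N M} (D : vec N -> Prop) (A : vec N -> vec M) DA xh (s : nat -> vec N) :
  C1_on D A DA -> D xh -> vcv s xh -> vcv (fun j => A (s j)) (A xh).
Proof.
  intros [H1 _] Hd Hs. destruct (H1 xh Hd 1 ltac:(lra)) as [de [Hde Hde']].
  set (c := 2 + jnorm DA xh).
  assert (Hc : 0 < c).
  { unfold c, jnorm. pose proof (fsum_nonneg M (fun j => vnorm (DA xh j)) (fun j => vnorm_nonneg _)). lra. }
  intros eps He. destruct (Hs (Rmin de (eps / c))) as [K HK].
  { apply Rmin_glb_lt; auto. apply Rdiv_lt_0_compat; lra. }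
  exists K. intros k Hk. specialize (HK k Hk).
  pose proof (Rmin_l de (eps / c)). pose proof (Rmin_r de (eps / c)).
  specialize (Hde' (s k) ltac:(lra)).
  pose proof (vnorm_triang (vsub (vsub (A (s k)) (A xh)) (jac_apply DA xh (vsub (s k) xh))) (jac_apply DA xh (vsub (s k) xh))) as Ht.
  replace (vadd (vsub (vsub (A (s k)) (A xh)) (jac_apply DA xh (vsub (s k) xh))) (jac_apply DA xh (vsub (s k) xh)))
    with (vsub (A (s k)) (A xh)) in Ht by (apply functional_extensionality; intros; unfold vadd, vsub; ring).
  pose proof (jac_bound DA xh (vsub (s k) xh)).
  set (nn := vnorm (vsub (s k) xh)) in *.
  assert (nn * c < eps).
  { apply (Rmult_lt_reg_r (/ c)). apply Rinv_0_lt_compat; lra.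
    replace (nn * c * / c) with nn by (field; lra). unfold Rdiv in *. lra. }
  unfold c in *. assert (0 <= nn) by apply vnorm_nonneg. nra.
Qed.

Lemma DA_cont {N M} (D : vec N -> Prop) (A : vec N -> vec M) DA xh (s : nat -> vec N) :
  C1_on D A DA -> D xh -> (forall j, D (s j)) -> vcv s xh -> forall i, vcv (fun j => DA (s j) i) (DA xh i).
Proof.
  intros [_ H2] Hd Hds Hs i eps He. destruct (H2 xh Hd i eps He) as [de [Hde Hde']].
  destruct (Hs de Hde) as [K HK]. exists K. intros k Hk. apply Hde'; auto.
Qed.

Lemma vcv_jac {N M} (DA : vec N -> Fin.t M -> vec N) (s : nat -> vec N) xh (h : nat -> vec N) hh :
  (forall i, vcv (fun j => DA (s j) i) (DA xh i)) -> vcv h hh ->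
  vcv (fun j => jac_apply DA (s j) (h j)) (jac_apply DA xh hh).
Proof.
  intros HD Hh. apply vcv_of_comp. intros i. unfold jac_apply. apply CV_vdot; auto.
Qed.

Lemma linA_cv {N M} (D : vec N -> Prop) (A : vec N -> vec M) DA xh (s t : nat -> vec N) y :
  C1_on D A DA -> D xh -> (forall j, D (s j)) -> vcv s xh -> vcv t y ->
  vcv (fun j => linA A DA (s j) (t j)) (linA A DA xh y).
Proof.
  intros HC Hd Hds Hs Ht. unfold linA. apply vcv_add.
  - eapply A_cont; eauto.
  - apply vcv_jac. + eapply DA_cont; eauto. + apply vcv_sub; auto.
Qed.

Lemma CV_halfsq {n} (s : nat -> vec n) x : vcv s x -> Un_cv (fun j => 1/2 * vnorm (s j) ^ 2) (1/2 * vnorm x ^ 2).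
Proof.
  intros H. apply CV_mult; [apply CV_const|]. simpl.
  apply CV_mult; [apply CV_vnorm; auto|]. apply CV_mult; [apply CV_vnorm; auto|apply CV_const].
Qed.

Lemma conv_step {N} (F : vec N -> ereal) w z x :
  convex_fun F -> 0 <= w <= 1 -> F z = Some (fval F z) -> F x = Some (fval F x) ->
  F (vadd (vscal (1 - w) z) (vscal w x)) = Some (fval F (vadd (vscal (1 - w) z) (vscal w x))) /\
  fval F (vadd (vscal (1 - w) z) (vscal w x)) <= (1 - w) * fval F z + w * fval F x.
Proof.
  intros Hc Hw Hz Hx. destruct (Hc z x (1 - w) _ _ ltac:(lra) Hz Hx) as [c [H1 H2]].
  replace (1 - (1 - w)) with w in * by ring. rewrite H1. rewrite (fval_some _ _ _ H1). split; auto.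
Qed.

Lemma descent_step {N M} (F : vec N -> ereal) (A : vec N -> vec M) DA beta eps w C d Amax infF J0 z x e z' :
  convex_fun F -> 0 < beta -> 0 < eps -> 0 < w -> w <= 1 -> 0 <= C ->
  w * sqrt (2 / beta * (J0 - infF)) <= d ->
  2 * C * Amax * w <= beta - eps ->
  (forall y a, F y = Some a -> infF <= a) ->
  (forall y, dom F y -> vnorm (A y) <= Amax) ->
  (forall x', vnorm (vsub x' z) <= d -> vnorm (vsub (A x') (linA A DA z x')) <= C * vnorm (vsub x' z) ^ 2) ->
  F z = Some (fval F z) ->
  1/2 * vnorm (A z) ^ 2 + fval F z <= J0 ->
  subdiff (Jtilde A DA F beta z) x e ->
  ((ele (Jtilde A DA F beta z x) (Jtilde A DA F beta z z) /\ x <> z) \/ (x = z /\ subdiff (Jtilde A DA F beta z) z vzero)) ->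
  z' = vadd (vscal (1 - w) z) (vscal w x) ->
  F z' = Some (fval F z') /\
  1/2 * vnorm (A z') ^ 2 + fval F z' <= 1/2 * vnorm (A z) ^ 2 + fval F z - w * eps / 2 * vnorm (vsub x z) ^ 2.
Proof.
  intros Hconv Hb He Hw0 Hw1 HC Hw2 Hw3 Hinf HAmax Htay Hz HzJ Hsub Hcase Hz'.
  destruct Hsub as [g [Hg _]]. pose proof Hg as Hg'. apply Jtilde_some in Hg as [Hfx Hgeq].
  destruct (conv_step F w z x Hconv ltac:(lra) Hz Hfx) as [Hfz' Hcv]. rewrite <- Hz' in Hfz', Hcv.
  split; [exact Hfz'|].
  destruct Hcase as [[Hle _]|[Hxz _]].
  2:{ subst x. assert (z' = z) by (subst z'; apply functional_extensionality; intros; unfold vadd, vscal; ring).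
      subst z'. rewrite H, vnorm_zero_sub. simpl. lra. }
  rewrite Hg', (Jtilde_val A DA F beta z z Hz), linA_self, vnorm_zero_sub in Hle. simpl in Hle.
  set (fz := fval F z) in *. set (fx := fval F x) in *. set (de := vnorm (vsub x z)) in *.
  assert (Hde0 : 0 <= de) by apply vnorm_nonneg.
  assert (Hsz : vsub z' z = vscal w (vsub x z)) by (subst z'; apply functional_extensionality; intros; unfold vsub, vadd, vscal; ring).
  assert (Hlin : linA A DA z z' = vadd (vscal (1 - w) (A z)) (vscal w (linA A DA z x))).
  { apply functional_extensionality; intros j. unfold linA, vadd, vscal, jac_apply. rewrite Hsz, vdot_scal_r. ring. }
  assert (Hstep : vnorm (vsub z' z) = w * de) by (rewrite Hsz, vnorm_scal, Rabs_pos_eq by lra; reflexivity).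
  assert (Hfxinf : infF <= fx) by (apply (Hinf x); auto).
  assert (HLx : 0 <= 1/2 * vnorm (linA A DA z x) ^ 2) by (pose proof (vnorm_nonneg (linA A DA z x)); nra).
  assert (Hd2 : de ^ 2 <= 2 / beta * (J0 - infF)).
  { apply (Rmult_le_reg_l (beta / 2)); [lra|]. replace (beta / 2 * (2 / beta * (J0 - infF))) with (J0 - infF) by (field; lra). lra. }
  assert (Hdes : de <= sqrt (2 / beta * (J0 - infF))).
  { rewrite <- (sqrt_pow2 de Hde0). apply sqrt_le_1_alt. auto. }
  assert (Hwd : vnorm (vsub z' z) <= d) by (rewrite Hstep; apply Rle_trans with (w * sqrt (2 / beta * (J0 - infF))); auto; apply Rmult_le_compat_l; lra).
  specialize (Htay z' Hwd). rewrite Hstep in Htay.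
  assert (HAz' : vnorm (A z') <= Amax) by (apply HAmax; unfold dom; rewrite Hfz'; discriminate).
  pose proof (halfsq_diff (A z') (linA A DA z z')) as Hdiff.
  assert (Hprod : vnorm (vsub (A z') (linA A DA z z')) * vnorm (A z') <= C * (w * de) ^ 2 * Amax).
  { apply Rmult_le_compat; auto using vnorm_nonneg. }
  pose proof (halfsq_convex (A z) (linA A DA z x) w ltac:(lra)) as Hcx. rewrite <- Hlin in Hcx.
  assert (Hkey : C * (w * de) ^ 2 * Amax <= w * (beta - eps) / 2 * de ^ 2).
  { replace (C * (w * de) ^ 2 * Amax) with ((2 * C * Amax * w) * (w * de ^ 2 / 2)) by field.
    replace (w * (beta - eps) / 2 * de ^ 2) with ((beta - eps) * (w * de ^ 2 / 2)) by field.
    apply Rmult_le_compat_r; [|auto]. assert (0 <= de ^ 2) by nra. nra. }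
  nra.
Qed.

Lemma CV_csq {n} c (s : nat -> vec n) x : vcv s x -> Un_cv (fun j => c * vnorm (s j) ^ 2) (c * vnorm x ^ 2).
Proof.
  intros H. apply CV_mult; [apply CV_const|]. simpl.
  apply CV_mult; [apply CV_vnorm; auto|]. apply CV_mult; [apply CV_vnorm; auto|apply CV_const].
Qed.

Lemma comp_lemma {n} (z : nat -> vec n) (U1 U2 : vec n -> Prop) B de K :
  0 < de ->
  (forall k, vnorm (z k) <= B) ->
  (forall x v1 v2, vnorm x <= B + 1 -> U1 v1 -> U2 v2 -> vnorm (vsub x v1) < de -> vnorm (vsub x v2) < de -> False) ->
  (forall r, 0 < r -> exists K, forall k, (K <= k)%nat -> exists v, (U1 v \/ U2 v) /\ vnorm (vsub (z k) v) < r) ->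
  (forall k, (K <= k)%nat -> vnorm (vsub (z k) (z (S k))) < de / 2) ->
  (forall k, (K <= k)%nat -> exists v, (U1 v \/ U2 v) /\ vnorm (vsub (z k) v) < de / 2) ->
  (forall xh, accumulation_point z xh -> U1 xh \/ U2 xh) ->
  (exists v, U1 v /\ vnorm (vsub (z K) v) < de / 2) ->
  (forall xh, accumulation_point z xh -> U1 xh) /\ dist_to_zero z U1.
Proof.
  intros Hde Hzb Hc2 Hc1 Hst Hnear Hacc H0.
  assert (Hstay : forall m, exists v, U1 v /\ vnorm (vsub (z (K + m)%nat) v) < de / 2).
  { induction m as [|m IH].
    - rewrite Nat.add_0_r. auto.
    - destruct IH as [v [Hv1 Hv2]]. destruct (Hnear (K + S m)%nat ltac:(lia)) as [v' [[H1|H2] Hv']].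
      + exists v'; auto.
      + exfalso. apply (Hc2 (z (K + m)%nat) v v'); auto.
        * specialize (Hzb (K + m)%nat); lra.
        * lra.
        * pose proof (vnorm_sub_tri (z (K + m)%nat) (z (S (K + m))) v').
          specialize (Hst (K + m)%nat ltac:(lia)). replace (S (K + m)) with (K + S m)%nat in * by lia. lra. }
  assert (Hstay' : forall k, (K <= k)%nat -> exists v, U1 v /\ vnorm (vsub (z k) v) < de / 2).
  { intros k Hk. replace k with (K + (k - K))%nat by lia. apply Hstay. }
  split.
  - intros xh Hx. destruct (Hacc xh Hx) as [|H2]; auto. exfalso.
    destruct (Hx (de / 2) ltac:(lra) K) as [k [Hk Hzk]].
    destruct (Hstay' k Hk) as [v [Hv1 Hv2]].
    apply (Hc2 (z k) v xh); auto. specialize (Hzb k); lra. lra. lra.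
  - intros eps He. destruct (Hc1 (Rmin eps (de / 2))) as [K3 HK3].
    { apply Rmin_glb_lt; lra. }
    exists (K + K3)%nat. intros k Hk.
    destruct (HK3 k ltac:(lia)) as [v' [[H1|H2] Hv']].
    + exists v'. split; auto. pose proof (Rmin_l eps (de / 2)); lra.
    + exfalso. destruct (Hstay' k ltac:(lia)) as [v [Hv1 Hv2]].
      apply (Hc2 (z k) v v'); auto. specialize (Hzb k); lra. lra.
      pose proof (Rmin_r eps (de / 2)); lra.
Qed.

Theorem theorem2p1 (N M : nat) (F : vec N -> ereal) (A : vec N -> vec M)
  (DA : vec N -> Fin.t M -> vec N)
  (HFconv : convex_fun F) (HFprop : proper F) (HFlsc : lsc F)
  (HA : C1_on (dom F) A DA)
  (z0 : vec N) (Hz0 : dom F z0)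
  (d C infF Amax : R) (Hd : 0 < d) (HC : 0 < C)
  (* Assumption 2.1 *)
  (Hlev : exists B, forall x, ele (Jfun A F x) (Jfun A F z0) -> vnorm x <= B)
  (HinfF : (forall x a, F x = Some a -> infF <= a) /\
           (forall m, (forall x a, F x = Some a -> m <= a) -> m <= infF))
  (HAmax : is_lub (fun r => exists z, dom F z /\ r = vnorm (A z)) Amax)
  (Htaylor : forall y, ele (Jfun A F y) (Jfun A F z0) ->
     forall x, vnorm (vsub x y) <= d ->
       vnorm (vsub (A x) (linA A DA y x)) <= C * vnorm (vsub x y) ^ 2)
  (beta eps w : R) (Hbeta : 0 < beta) (Heps : 0 < eps < beta)
  (Hw0 : 0 < w) (Hw1 : w <= 1)
  (Hw2 : forall J0, Jfun A F z0 = Some J0 ->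
           w * sqrt (2 / beta * (J0 - infF)) <= d)
  (Hw3 : 2 * C * Amax * w <= beta - eps)
  (z xt e : nat -> vec N)
  (Hzinit : z 0%nat = z0)
  (Hiter : forall k, z (S k) = vadd (vscal (1 - w) (z k)) (vscal w (xt k)))
  (He : forall k, subdiff (Jtilde A DA F beta (z k)) (xt k) (e k))
  (He0 : forall r, 0 < r -> exists K, forall k, (K <= k)%nat -> vnorm (e k) < r)
  (Hcase : forall k,
     (ele (Jtilde A DA F beta (z k) (xt k)) (Jtilde A DA F beta (z k) (z k))
        /\ xt k <> z k)
     \/ (xt k = z k /\ subdiff (Jtilde A DA F beta (z k)) (z k) vzero)) :
  exists L : R,
    (* (i) *)
    (exists u : nat -> R, (forall k, Jfun A F (z k) = Some (u k)) /\
        (forall k, u (S k) <= u k) /\ Un_cv u L) /\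
    (* (ii) *)
    (forall xh, accumulation_point z xh ->
        clarke_critical A DA F xh /\ Jfun A F xh = Some L) /\
    (* (iii) *)
    (forall U1 U2 : vec N -> Prop,
        closed_vset U1 -> closed_vset U2 -> (forall x, ~ (U1 x /\ U2 x)) ->
        (forall x, (dom F x /\ clarke_critical A DA F x /\ Jfun A F x = Some L)
                   <-> (U1 x \/ U2 x)) ->
        ((forall xh, accumulation_point z xh -> U1 xh) /\ dist_to_zero z U1) \/
        ((forall xh, accumulation_point z xh -> U2 xh) /\ dist_to_zero z U2)).
Proof.
  assert (HF0 : F z0 = Some (fval F z0)) by (apply dom_fval; auto).
  set (J0 := 1/2 * vnorm (A z0) ^ 2 + fval F z0).
  assert (HJ0 : Jfun A F z0 = Some J0) by (unfold Jfun, J0; rewrite HF0; reflexivity).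
  destruct HinfF as [Hinf _].
  assert (HAb : forall y, dom F y -> vnorm (A y) <= Amax) by (intros y Hy; apply HAmax; exists y; auto).
  destruct Hlev as [B HB].
  assert (HC0 : 0 <= C) by lra.
  specialize (Hw2 J0 HJ0).
  set (u := fun k => 1/2 * vnorm (A (z k)) ^ 2 + fval F (z k)).
  set (de := fun k => vnorm (vsub (xt k) (z k))).
  assert (HJz : forall k, F (z k) = Some (fval F (z k)) -> Jfun A F (z k) = Some (u k)).
  { intros k Hk. unfold Jfun, u. rewrite Hk. reflexivity. }
  assert (Hdesc : forall k, F (z k) = Some (fval F (z k)) -> u k <= J0 ->
            F (z (S k)) = Some (fval F (z (S k))) /\ u (S k) <= u k - w * eps / 2 * de k ^ 2).
  { intros k Hk Hu.
    apply (descent_step F A DA beta eps w C d Amax infF J0 (z k) (xt k) (e k) (z (S k))); auto; try lra.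
    intros x' Hx'. apply Htaylor; auto. rewrite HJz, HJ0 by auto. simpl. exact Hu. }
  assert (Hinv : forall k, F (z k) = Some (fval F (z k)) /\ u k <= J0).
  { induction k as [|k [IH1 IH2]].
    - rewrite Hzinit. split; auto. unfold u. rewrite Hzinit. unfold J0. lra.
    - destruct (Hdesc k IH1 IH2) as [H1 H2]. split; auto.
      assert (0 <= de k ^ 2) by (apply pow2_ge_0). assert (0 <= w * eps / 2) by (pose proof (Rmult_lt_0_compat w eps Hw0 (proj1 Heps)); lra). nra. }
  assert (Hdec : forall k, u (S k) <= u k - w * eps / 2 * de k ^ 2) by (intros k; apply Hdesc; apply Hinv).
  assert (Hdec' : forall k, u (S k) <= u k).
  { intros k. specialize (Hdec k). assert (0 <= de k ^ 2) by (apply pow2_ge_0).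
    assert (0 <= w * eps / 2) by (pose proof (Rmult_lt_0_compat w eps Hw0 (proj1 Heps)); lra). nra. }
  assert (Hlb : forall k, infF <= u k).
  { intros k. unfold u. pose proof (Hinf _ _ (proj1 (Hinv k))). pose proof (pow2_ge_0 (vnorm (A (z k)))). lra. }
  destruct (decreasing_cv u Hdec') as [L HL].
  { exists (- infF). intros x [i Hi]. rewrite Hi. unfold opp_seq. specialize (Hlb i). lra. }
  exists L.
  assert (Hdelta : Un_cv de 0).
  { intros r Hr. assert (Hr' : 0 < w * eps * r ^ 2 / 8).
    { apply Rdiv_lt_0_compat; [|lra]. apply Rmult_lt_0_compat; [nra|]. apply pow_lt; auto. }
    destruct (HL _ Hr') as [K HK]. exists K. intros k Hk.
    pose proof (HK k Hk) as H1. pose proof (HK (S k) ltac:(lia)) as H2. unfold Rdist in *.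
    rewrite Rminus_0_r, Rabs_pos_eq by apply vnorm_nonneg.
    pose proof (Rle_abs (u k - L)). pose proof (Rle_abs (- (u (S k) - L))). rewrite Rabs_Ropp in *.
    specialize (Hdec k).
    assert (w * eps / 2 * de k ^ 2 < w * eps / 2 * (r ^ 2 / 2)).
    { replace (w * eps / 2 * (r ^ 2 / 2)) with (2 * (w * eps * r ^ 2 / 8)) by field. lra. }
    apply Rmult_lt_reg_l in H3; [|apply Rmult_lt_0_compat; [nra|lra]].
    assert (0 <= de k) by apply vnorm_nonneg. nra. }
  assert (Hzb : forall k, vnorm (z k) <= B).
  { intros k. apply HB. rewrite HJz, HJ0 by apply Hinv. simpl. apply Hinv. }
  assert (Hzstep : Un_cv (fun k => vnorm (vsub (z (S k)) (z k))) 0).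
  { apply CV_ext with (fun k => w * de k).
    - intros k. rewrite Hiter. unfold de.
      replace (vsub (vadd (vscal (1 - w) (z k)) (vscal w (xt k))) (z k)) with (vscal w (vsub (xt k) (z k)))
        by (apply functional_extensionality; intros; unfold vsub, vadd, vscal; ring).
      rewrite vnorm_scal, Rabs_pos_eq by lra. reflexivity.
    - replace 0 with (w * 0) by ring. apply CV_mult; [apply CV_const|auto]. }
  assert (Hecv : vcv e vzero).
  { intros r Hr. destruct (He0 r Hr) as [K HK]. exists K. intros k Hk.
    replace (vsub (e k) vzero) with (e k) by (apply functional_extensionality; intros; unfold vsub, vzero; ring). auto. }
  assert (Hfx : forall k, F (xt k) = Some (fval F (xt k))).
  { intros k. destruct (He k) as [g [Hg _]]. apply Jtilde_some in Hg. apply Hg. }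
  assert (Hsubineq : forall k y, F y = Some (fval F y) ->
     1/2 * vnorm (linA A DA (z k) (xt k)) ^ 2 + beta / 2 * de k ^ 2 + fval F (xt k) + vdot (e k) (vsub y (xt k))
     <= 1/2 * vnorm (linA A DA (z k) y) ^ 2 + beta / 2 * vnorm (vsub y (z k)) ^ 2 + fval F y).
  { intros k y Hy. destruct (He k) as [g [Hg Hg2]]. specialize (Hg2 y).
    apply Jtilde_some in Hg as [_ Hg]. rewrite (Jtilde_val A DA F beta (z k) y Hy) in Hg2. simpl in Hg2.
    rewrite Hg in Hg2. unfold de. exact Hg2. }
  assert (Hacc : forall xh, accumulation_point z xh ->
            clarke_critical A DA F xh /\ Jfun A F xh = Some L /\ dom F xh).
  { intros xh Hxh. destruct (acc_subseq z xh Hxh) as [phi [Hphi Hzc]].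
    pose proof (strict_incr_ge phi Hphi) as Hge.
    assert (Hdom : dom F xh).
    { intros Hn. destruct (HFlsc xh J0) as [r0 [Hr0 Hr0']]. { rewrite Hn. simpl. auto. }
      destruct (Hzc r0 Hr0) as [K HK]. specialize (Hr0' _ (HK K (le_n K))).
      rewrite (proj1 (Hinv (phi K))) in Hr0'. simpl in Hr0'.
      pose proof (proj2 (Hinv (phi K))). unfold u in H. pose proof (pow2_ge_0 (vnorm (A (z (phi K))))). lra. }
    pose proof (dom_fval F xh Hdom) as Hfh. set (fh := fval F xh) in *.
    assert (Hdz : forall j, dom F (z (phi j))).
    { intros j. unfold dom. rewrite (proj1 (Hinv (phi j))). discriminate. }
    assert (Hxc : vcv (fun j => xt (phi j)) xh).
    { apply (vcv_close (fun j => z (phi j))); auto. apply (CV_subseq de 0 phi Hge Hdelta). }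
    assert (Hz1c : vcv (fun j => z (S (phi j))) xh).
    { apply (vcv_close (fun j => z (phi j))); auto. apply (CV_subseq _ 0 phi Hge Hzstep). }
    assert (Hec : vcv (fun j => e (phi j)) vzero) by (apply vcv_subseq; auto).
    assert (HcvR : forall y, Un_cv (fun j => 1/2 * vnorm (linA A DA (z (phi j)) (xt (phi j))) ^ 2 + beta / 2 * de (phi j) ^ 2
                                      + vdot (e (phi j)) (vsub y (xt (phi j)))) (1/2 * vnorm (A xh) ^ 2)).
    { intros y. replace (1/2 * vnorm (A xh) ^ 2) with (1/2 * vnorm (linA A DA xh xh) ^ 2 + beta/2 * vnorm (vsub xh xh) ^ 2 + vdot vzero (vsub y xh)).
      2:{ rewrite linA_self, vnorm_zero_sub, vdot_sym, vdot_zero_r. ring. }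
      apply CV_plus; [apply CV_plus|].
      - apply CV_csq. apply (linA_cv (dom F)); auto.
      - apply CV_csq. apply vcv_sub; auto.
      - apply CV_vdot; auto. apply vcv_sub; auto. apply vcv_const. }
    assert (HcvL : forall y, Un_cv (fun j => 1/2 * vnorm (linA A DA (z (phi j)) y) ^ 2 + beta / 2 * vnorm (vsub y (z (phi j))) ^ 2)
                                   (1/2 * vnorm (linA A DA xh y) ^ 2 + beta / 2 * vnorm (vsub y xh) ^ 2)).
    { intros y. apply CV_plus.
      - apply CV_csq. apply (linA_cv (dom F)); auto. apply vcv_const.
      - apply CV_csq. apply vcv_sub; auto. apply vcv_const. }
    assert (Hopt : forall y fy, F y = Some fy ->
      fh + 1/2 * vnorm (A xh) ^ 2 <= fy + 1/2 * vnorm (vadd (A xh) (jac_apply DA xh (vsub y xh))) ^ 2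
        + beta / 2 * vnorm (vsub y xh) ^ 2).
    { intros y fy Hy. pose proof (fval_some _ _ _ Hy) as Hfy.
      assert (fh <= (1/2 * vnorm (linA A DA xh y) ^ 2 + beta / 2 * vnorm (vsub y xh) ^ 2 + fy) - 1/2 * vnorm (A xh) ^ 2).
      { apply (lsc_liminf F xh fh (fun j => xt (phi j)) (fun j => fval F (xt (phi j)))
           (fun j => (1/2 * vnorm (linA A DA (z (phi j)) y) ^ 2 + beta / 2 * vnorm (vsub y (z (phi j))) ^ 2 + fy)
                     - (1/2 * vnorm (linA A DA (z (phi j)) (xt (phi j))) ^ 2 + beta / 2 * de (phi j) ^ 2
                        + vdot (e (phi j)) (vsub y (xt (phi j)))))); auto.
        - intros j. pose proof (Hsubineq (phi j) y) as Hs. rewrite Hfy in Hs. specialize (Hs Hy). lra.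
        - apply CV_minus; auto. apply CV_plus; auto. apply CV_const. }
      unfold linA in H. lra. }
    split; [|split; auto].
    - exists (vscal (-1) (jacT_apply DA xh (A xh))). split.
      + exists fh. split; auto. intros y. destruct (F y) eqn:Hy; simpl; auto.
        rewrite vdot_scal_l. pose proof (opt_to_crit F DA (A xh) xh fh beta HFconv Hfh Hbeta Hopt y r Hy). lra.
      + apply functional_extensionality; intros; unfold vadd, vscal, vzero; ring.
    -
      set (l := L - 1/2 * vnorm (A xh) ^ 2).
      assert (Hcz : Un_cv (fun j => fval F (z (phi j))) l).
      { apply CV_ext with (fun j => u (phi j) - 1/2 * vnorm (A (z (phi j))) ^ 2).
        - intros j; unfold u; ring.
        - apply CV_minus. apply CV_subseq; auto. apply CV_csq. apply (A_cont (dom F) A DA); auto. }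
      assert (Hcz1 : Un_cv (fun j => fval F (z (S (phi j)))) l).
      { apply CV_ext with (fun j => u (S (phi j)) - 1/2 * vnorm (A (z (S (phi j)))) ^ 2).
        - intros j; unfold u; ring.
        - apply CV_minus.
          + apply (CV_subseq u L (fun j => S (phi j))); [intros j; specialize (Hge j); lia|auto].
          + apply CV_csq. apply (A_cont (dom F) A DA); auto. }
      assert (Hle1 : l <= (1 - w) * l + w * fh).
      { apply (Rle_cv_lim (Un := fun j => fval F (z (S (phi j))))
          (Vn := fun j => (1 - w) * fval F (z (phi j)) + w * ((1/2 * vnorm (linA A DA (z (phi j)) xh) ^ 2 + beta / 2 * vnorm (vsub xh (z (phi j))) ^ 2 + fh)
                     - (1/2 * vnorm (linA A DA (z (phi j)) (xt (phi j))) ^ 2 + beta / 2 * de (phi j) ^ 2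
                        + vdot (e (phi j)) (vsub xh (xt (phi j))))))); auto.
        - intros j. rewrite Hiter.
          destruct (conv_step F w (z (phi j)) (xt (phi j)) HFconv ltac:(lra) (proj1 (Hinv (phi j))) (Hfx (phi j))) as [_ Hcv].
          pose proof (Hsubineq (phi j) xh Hfh) as Hs. fold fh in Hs.
          assert (w * fval F (xt (phi j)) <= w * ((1/2 * vnorm (linA A DA (z (phi j)) xh) ^ 2 + beta / 2 * vnorm (vsub xh (z (phi j))) ^ 2 + fh)
                     - (1/2 * vnorm (linA A DA (z (phi j)) (xt (phi j))) ^ 2 + beta / 2 * de (phi j) ^ 2
                        + vdot (e (phi j)) (vsub xh (xt (phi j)))))) by (apply Rmult_le_compat_l; lra).
          lra.
        - replace ((1 - w) * l + w * fh) with ((1 - w) * l + w * ((1/2 * vnorm (linA A DA xh xh) ^ 2 + beta / 2 * vnorm (vsub xh xh) ^ 2 + fh) - 1/2 * vnorm (A xh) ^ 2)).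
          2:{ rewrite linA_self, vnorm_zero_sub. ring. }
          apply CV_plus; apply CV_mult; try apply CV_const; auto.
          apply CV_minus; auto. apply CV_plus; auto. apply CV_const. }
      assert (Hle2 : fh <= l).
      { apply (lsc_liminf F xh fh (fun j => z (phi j)) (fun j => fval F (z (phi j))) (fun j => fval F (z (phi j)))); auto.
        - intros j; apply Hinv.
        - intros j; lra. }
      assert (fh = l) by nra.
      unfold Jfun. rewrite Hfh. simpl. f_equal. unfold l in H. lra. }
  split; [|split].
  - exists u. split; [intros k; apply HJz, Hinv|]. split; auto.
  - intros xh Hxh. destruct (Hacc xh Hxh) as [H1 [H2 _]]. auto.
  - intros U1 U2 HU1 HU2 Hdisj Hiff.
    assert (Haccin : forall xh, accumulation_point z xh -> U1 xh \/ U2 xh).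
    { intros xh Hxh. apply Hiff. destruct (Hacc xh Hxh) as [H1 [H2 H3]]. auto. }
    assert (Hc1 : forall r, 0 < r -> exists K, forall k, (K <= k)%nat -> exists v, (U1 v \/ U2 v) /\ vnorm (vsub (z k) v) < r).
    { intros r Hr. apply NNPP. intros Hn.
      set (P := fun k => ~ exists v, (U1 v \/ U2 v) /\ vnorm (vsub (z k) v) < r).
      assert (Hinf' : forall K, exists k, (K <= k)%nat /\ P k).
      { intros K. apply NNPP. intros Hk. apply Hn. exists K. intros k Hk2. apply NNPP. intros Hk3.
        apply Hk. exists k. split; auto. }
      destruct (acc_exists z P B (fun k _ => Hzb k) Hinf') as [x Hx].
      assert (Hxacc : accumulation_point z x).
      { intros ep Hep K. destruct (Hx ep Hep K) as [k [Hk [_ Hk2]]]. exists k; auto. }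
      destruct (Hx r Hr 0%nat) as [k [_ [Pk Hk]]]. apply Pk. exists x. split; auto. }
    assert (Hc2 : exists dl, 0 < dl /\ forall x v1 v2, vnorm x <= B + 1 -> U1 v1 -> U2 v2 ->
                     vnorm (vsub x v1) < dl -> vnorm (vsub x v2) < dl -> False).
    { apply NNPP. intros Hn.
      assert (Hall : forall k : nat, exists p : vec N * vec N * vec N,
                 vnorm (fst (fst p)) <= B + 1 /\ U1 (snd (fst p)) /\ U2 (snd p) /\
                 vnorm (vsub (fst (fst p)) (snd (fst p))) < 1 / (INR k + 1) /\
                 vnorm (vsub (fst (fst p)) (snd p)) < 1 / (INR k + 1)).
      { intros k. apply NNPP. intros Hk. apply Hn. exists (1 / (INR k + 1)). split.
        { pose proof (pos_INR k). apply Rdiv_lt_0_compat; lra. }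
        intros x v1 v2 H1 H2 H3 H4 H5. apply Hk. exists (x, v1, v2). simpl. auto. }
      set (pk := fun k => proj1_sig (constructive_indefinite_description _ (Hall k))).
      assert (Hpk : forall k, vnorm (fst (fst (pk k))) <= B + 1 /\ U1 (snd (fst (pk k))) /\ U2 (snd (pk k)) /\
                 vnorm (vsub (fst (fst (pk k))) (snd (fst (pk k)))) < 1 / (INR k + 1) /\
                 vnorm (vsub (fst (fst (pk k))) (snd (pk k))) < 1 / (INR k + 1)).
      { intros k. unfold pk. destruct (constructive_indefinite_description _ (Hall k)); auto. }
      assert (Hsm : forall k, 1 / (INR k + 1) <= 1).
      { intros k. pose proof (pos_INR k). apply (Rmult_le_reg_r (INR k + 1)); [lra|].
        replace (1 / (INR k + 1) * (INR k + 1)) with 1 by (field; lra). lra. }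
      destruct (acc_exists (fun k => snd (fst (pk k))) (fun _ => True) (B + 2)) as [y Hy].
      { intros k _. destruct (Hpk k) as [H1 [_ [_ [H4 _]]]]. specialize (Hsm k).
        pose proof (vnorm_sub_tri (snd (fst (pk k))) (fst (fst (pk k))) vzero).
        replace (vsub (snd (fst (pk k))) vzero) with (snd (fst (pk k))) in H by (apply functional_extensionality; intros; unfold vsub, vzero; ring).
        replace (vsub (fst (fst (pk k))) vzero) with (fst (fst (pk k))) in H by (apply functional_extensionality; intros; unfold vsub, vzero; ring).
        rewrite vnorm_sub_sym in H. lra. }
      { intros K. exists K. auto. }
      apply (Hdisj y). split.
      - apply HU1. intros ep Hep. destruct (Hy ep Hep 0%nat) as [k [_ [_ Hk]]].
        exists (snd (fst (pk k))). split; [apply Hpk|auto].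
      - apply HU2. intros ep Hep. destruct (inv_small (ep / 4)) as [K HK]; [lra|].
        destruct (Hy (ep / 2) ltac:(lra) K) as [k [Hk [_ Hk2]]].
        exists (snd (pk k)). split; [apply Hpk|].
        destruct (Hpk k) as [_ [_ [_ [H4 H5]]]]. specialize (HK k Hk).
        pose proof (vnorm_sub_tri (snd (pk k)) (fst (fst (pk k))) y).
        pose proof (vnorm_sub_tri (fst (fst (pk k))) (snd (fst (pk k))) y).
        rewrite (vnorm_sub_sym (snd (pk k)) (fst (fst (pk k)))) in H. lra. }
    destruct Hc2 as [dl [Hdl Hc2]].
    destruct (Hc1 (dl / 2) ltac:(lra)) as [K1 HK1].
    destruct (Hzstep (dl / 2) ltac:(lra)) as [K2 HK2].
    set (K := (K1 + K2)%nat).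
    assert (Hst : forall k, (K <= k)%nat -> vnorm (vsub (z k) (z (S k))) < dl / 2).
    { intros k Hk. specialize (HK2 k ltac:(unfold K in *; lia)). unfold Rdist in HK2.
      rewrite Rminus_0_r, Rabs_pos_eq in HK2 by apply vnorm_nonneg. rewrite vnorm_sub_sym. auto. }
    assert (Hnear : forall k, (K <= k)%nat -> exists v, (U1 v \/ U2 v) /\ vnorm (vsub (z k) v) < dl / 2).
    { intros k Hk. apply HK1. unfold K in *; lia. }
    destruct (Hnear K (le_n K)) as [v0 [[H1|H2] Hv0]].
    + left. apply (comp_lemma z U1 U2 B dl K); eauto.
    + right. apply (comp_lemma z U2 U1 B dl K).
      * exact Hdl.
      * exact Hzb.
      * intros x v1 v2 a b c f g. apply (Hc2 x v2 v1); auto.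
      * intros r Hr. destruct (Hc1 r Hr) as [K' HK']. exists K'. intros k Hk.
        destruct (HK' k Hk) as [v [Hv Hv']]. exists v. split; [tauto|auto].
      * exact Hst.
      * intros k Hk. destruct (Hnear k Hk) as [v [Hv Hv']]. exists v. split; [tauto|auto].
      * intros xh Hxh. destruct (Haccin xh Hxh); auto.
      * exists v0; auto.
Qed.
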